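(* A pattern $P\in\{0,1\}^{k\times\ell}$ that avoids $D_2$ or avoids $\overline{D}_2$ is row-bounding, i.e., $\mathrm{Av}(P)$ is row-bounded.
   Context: All matrices are binary; rows numbered top to bottom, columns left to right; $(i,j)$ is the entry in row $i$, column $j$; $(a,b]=\{a+1,\dots,b\}$. $D_2\in\{0,1\}^{2\times2}$ has 1-entries exactly at $(1,1),(2,2)$; $\overline D_2$ has 1-entries exactly at $(1,2),(2,1)$. A pattern $P\in\{0,1\}^{k\times\ell}$ is an interval minor of $M\in\{0,1\}^{m\times n}$ if there are integers $0=r_0<\dots<r_k=m$ and $0=c_0<\dots<c_\ell=n$ such that for each 1-entry $(i,j)$ of $P$ the submatrix of $M$ on rows $(r_{i-1},r_i]$ and columns $(c_{j-1},c_j]$ contains a 1-entry; otherwise $M$ avoids $P$. $\mathrm{Av}(P)$ is the set of binary matrices avoiding $P$. $M\in\mathrm{Av}(P)$ is critical if changing any single 0-entry of $M$ to a 1-entry produces a matrix containing $P$. A horizontal 0-run is a maximal set of consecutive 0-entries within one row; the complexity of a row is the number of such runs. $\mathrm{Av}(P)$ is row-bounded (and $P$ row-bounding) if there is a constant bounding the complexity of every row of every critical matrix in $\mathrm{Av}(P)$. *)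

(* Defs.v *)
(* Binary matrices are 'M[bool]_(m, n); entries are 0-indexed
   ('I_m, 'I_n), so paper row i (1-based) is index i-1 here. *)
From mathcomp Require Import all_boot all_algebra.
Set Implicit Arguments. Unset Strict Implicit. Unset Printing Implicit Defensive.

Definition is_cut (k m : nat) (r : nat -> nat) : Prop :=
  r 0 = 0 /\ r k = m /\ (forall i, i < k -> r i < r i.+1).

(* P is an interval minor of M. Block i (0-based) consists of the 0-based rows
   a with r i <= a < r (i+1), i.e. the 1-based rows (r_i, r_{i+1}]. *)
Definition contains (k l m n : nat) (P : 'M[bool]_(k, l)) (M : 'M[bool]_(m, n)) : Prop :=
  exists (r c : nat -> nat), is_cut k m r /\ is_cut l n c /\
    forall (i : 'I_k) (j : 'I_l), P i j ->
      exists (a : 'I_m) (b : 'I_n),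
        [/\ r i <= a < r i.+1, c j <= b < c j.+1 & M a b].

Definition avoids (k l m n : nat) (P : 'M[bool]_(k, l)) (M : 'M[bool]_(m, n)) : Prop :=
  ~ contains P M.

Definition D2 : 'M[bool]_(2, 2) := \matrix_(i < 2, j < 2) (i == j :> nat).
Definition D2bar : 'M[bool]_(2, 2) := \matrix_(i < 2, j < 2) (i + j == 1).

Definition set_one (m n : nat) (M : 'M[bool]_(m, n)) (a : 'I_m) (b : 'I_n) : 'M[bool]_(m, n) :=
  \matrix_(i, j) (M i j || ((i == a) && (j == b))).

Definition critical (k l m n : nat) (P : 'M[bool]_(k, l)) (M : 'M[bool]_(m, n)) : Prop :=
  avoids P M /\ forall (a : 'I_m) (b : 'I_n), M a b = false -> contains P (set_one M a b).

(* number of maximal runs of consecutive false entries in a sequence: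
   count the positions i holding a 0 that either start the row or follow a 1 *)
Definition zero_runs (s : seq bool) : nat :=
  count (fun i => ~~ nth true s i && ((i == 0) || nth false s i.-1)) (iota 0 (size s)).

Definition row_complexity (m n : nat) (M : 'M[bool]_(m, n)) (a : 'I_m) : nat :=
  zero_runs [seq M a j | j <- enum 'I_n].

Definition row_bounded (k l : nat) (P : 'M[bool]_(k, l)) : Prop :=
  exists C : nat, forall (m n : nat) (M : 'M[bool]_(m, n)),
    critical P M -> forall a : 'I_m, row_complexity M a <= C.

(* Main.v *)
Require Import Defs.
From mathcomp Require Import all_boot all_algebra.
From mathcomp Require Import zify.
From Stdlib Require Import Classical ClassicalEpsilon.
Set Implicit Arguments. Unset Strict Implicit. Unset Printing Implicit Defensive.

Lemma cut_mono k m r : is_cut k m r -> forall i j, i <= j -> j <= k -> r i <= r j.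
Proof.
move=> [_ [_ H]] i j; elim: j => [|j IH]; first by rewrite leqn0 => /eqP->.
rewrite leq_eqVlt => /orP[/eqP->//|Hij] Hj.
have := H j Hj; have := IH Hij (ltnW Hj); lia.
Qed.

Lemma cut_lt k m r : is_cut k m r -> forall i j, i < j -> j <= k -> r i < r j.
Proof.
move=> Hc i j Hij Hj; have [_ [_ H]] := Hc.
have := H i (leq_trans Hij Hj); have := cut_mono Hc Hij Hj; lia.
Qed.

Lemma cut_uniq k m r (i i' x : nat) : is_cut k m r -> i < k -> i' < k ->
  r i <= x < r i.+1 -> r i' <= x < r i'.+1 -> i = i'.
Proof.
move=> Hc Hi Hi' H1 H2; case: (ltngtP i i') => // Hlt.
- have := cut_mono Hc Hlt (ltnW Hi'); lia.
- have := cut_mono Hc Hlt (ltnW Hi); lia.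
Qed.

Lemma cut_top k m r i : is_cut k m r -> i < k -> r i.+1 <= m.
Proof. move=> Hc Hi; have [_ [Hk _]] := Hc; have := @cut_mono k m r Hc i.+1 k Hi (leqnn k); lia. Qed.

Definition cut3 (x k : nat) := fun t : nat => if t == 0 then 0 else if t == 1 then x else k.

Lemma cut3P x k : 0 < x < k -> is_cut 2 k (cut3 x k).
Proof.
move=> H; rewrite /is_cut /cut3 /=; split=> //; split=> // i; case: i => [|[|//]] //= _; lia.
Qed.

Lemma noD2 k l (P : 'M[bool]_(k, l)) : avoids D2 P ->
  forall (i1 i2 : 'I_k) (j1 j2 : 'I_l), P i1 j1 -> P i2 j2 -> i1 < i2 -> j1 < j2 -> False.
Proof.
move=> HA i1 i2 j1 j2 H1 H2 Hi Hj; apply: HA.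
exists (cut3 i1.+1 k), (cut3 j1.+1 l); split; first by apply: cut3P; have := ltn_ord i2; lia.
split; first by apply: cut3P; have := ltn_ord j2; lia.
move=> [[|[|//]] Hx] [[|[|//]] Hy]; rewrite mxE //= => _.
- by exists i1, j1; rewrite /cut3 /= H1; split=> //; lia.
- exists i2, j2; rewrite /cut3 /= H2; split=> //; have := ltn_ord i2; have := ltn_ord j2; lia.
Qed.

Lemma noD2bar k l (P : 'M[bool]_(k, l)) : avoids D2bar P ->
  forall (i1 i2 : 'I_k) (j1 j2 : 'I_l), P i1 j1 -> P i2 j2 -> i1 < i2 -> j2 < j1 -> False.
Proof.
move=> HA i1 i2 j1 j2 H1 H2 Hi Hj; apply: HA.
exists (cut3 i1.+1 k), (cut3 j2.+1 l); split; first by apply: cut3P; have := ltn_ord i2; lia.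
split; first by apply: cut3P; have := ltn_ord j1; lia.
move=> [[|[|//]] Hx] [[|[|//]] Hy]; rewrite mxE //= => _.
- exists i1, j1; rewrite /cut3 /= H1; split=> //; have := ltn_ord j1; lia.
- exists i2, j2; rewrite /cut3 /= H2; split=> //; have := ltn_ord i2; lia.
Qed.

Definition zdata k l m n (P : 'M[bool]_(k, l)) (M : 'M[bool]_(m, n)) (a : 'I_m) (z : nat)
  (i : 'I_k) (j : 'I_l) (r c : nat -> nat) : Prop :=
  is_cut k m r /\ is_cut l n c /\ P i j /\ (r i <= a < r i.+1) /\ (c j <= z < c j.+1) /\
  (forall b : 'I_n, c j <= b < c j.+1 -> M a b = false) /\
  (forall (i1 : 'I_k) (j1 : 'I_l), P i1 j1 -> exists (a' : 'I_m) (b' : 'I_n),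
     [/\ r i1 <= a' < r i1.+1, c j1 <= b' < c j1.+1 & M a' b' || ((a' == a) && (val b' == z))]).

Lemma zero_label k l m n (P : 'M[bool]_(k, l)) (M : 'M[bool]_(m, n)) (a : 'I_m) (b : 'I_n) :
  critical P M -> M a b = false -> exists i j r c, zdata P M a b i j r c.
Proof.
case=> Hav Hcr Hz; have [r [c [Hr [Hc W]]]] := Hcr a b Hz.
have W' : forall (i1 : 'I_k) (j1 : 'I_l), P i1 j1 -> exists (a' : 'I_m) (b' : 'I_n),
     [/\ r i1 <= a' < r i1.+1, c j1 <= b' < c j1.+1 & M a' b' || ((a' == a) && (val b' == b))].
  move=> i1 j1 Hp; have [a' [b' [H1 H2 H3]]] := W i1 j1 Hp; exists a', b'; split=> //.
  by move: H3; rewrite mxE.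
case: (classic (exists (i : 'I_k) (j : 'I_l), P i j /\ r i <= a < r i.+1 /\ c j <= b < c j.+1)).
- move=> [i [j [Pij [Ha Hb]]]]; exists i, j, r, c; do 6 (split => //).
  move=> b' Hb'; apply/negP => Hm; apply: Hav; exists r, c; split=> //; split=> //.
  move=> i1 j1 Hp; have [a' [b'' [H1 H2 H3]]] := W' i1 j1 Hp.
  case/orP: H3 => [H3|/andP [/eqP Ea /eqP Eb]]; first by exists a', b''.
  subst a'; rewrite Eb in H2.
  have Ei : i1 = i by apply: val_inj; apply: (cut_uniq Hr (ltn_ord i1) (ltn_ord i) H1 Ha).
  have Ej : j1 = j by apply: val_inj; apply: (cut_uniq Hc (ltn_ord j1) (ltn_ord j) H2 Hb).
  subst; by exists a, b'.
- move=> Hn; exfalso; apply: Hav; exists r, c; split=> //; split=> //.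
  move=> i1 j1 Hp; have [a' [b'' [H1 H2 H3]]] := W' i1 j1 Hp.
  case/orP: H3 => [H3|/andP [/eqP Ea /eqP Eb]]; first by exists a', b''.
  exfalso; apply: Hn; exists i1, j1; subst a'; rewrite Eb in H2; by [].
Qed.

Lemma combine k l m n (P : 'M[bool]_(k, l)) (M : 'M[bool]_(m, n.+1)) (fl : bool)
  (Hno : forall (i1 i2 : 'I_k) (j1 j2 : 'I_l), P i1 j1 -> P i2 j2 -> i1 < i2 ->
          (if fl then j1 < j2 else j2 < j1) -> False)
  (a : 'I_m) (zL zR : nat) (i : 'I_k) (jL jR : 'I_l) rL cL rR cR :
  zdata P M a zL i jL rL cL -> zdata P M a zR i jR rR cR -> zL < zR ->
  l <= count (fun b => M a (inord b)) (iota zL (zR - zL)) -> contains P M.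
Proof.
move=> [HrL [HcL [PL [HaL [HzL [ZL WL]]]]]] [HrR [HcR [PR [HaR [HzR [ZR WR]]]]]] Hz Hcnt.
have [lo Plo Hlo] : exists2 lo : 'I_l, P i lo & forall j, P i j -> lo <= j.
  exists [arg min_(j < jL | P i j) (j : nat)]; case: arg_minnP => //.
have [hi Phi Hhi] : exists2 hi : 'I_l, P i hi & forall j, P i j -> j <= hi.
  exists [arg max_(j > jR | P i j) (j : nat)]; case: arg_maxnP => //.
have loL := Hlo _ PL; have hiR := Hhi _ PR; have lohi := Hlo _ Phi.
have hil := ltn_ord hi.
set s := [seq b <- iota zL (zR - zL) | M a (inord b)].
have Hs : l <= size s by rewrite size_filter.
pose w t := nth 0 s t.
have Hmem : forall t, t < size s -> M a (inord (w t)) /\ zL <= w t < zR.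
  move=> t Ht; have := mem_nth 0 Ht; rewrite mem_filter mem_iota => /andP[-> H].
  rewrite /w /=; split=> //; have H' : zL <= nth 0 s t < zL + (zR - zL) := H; lia.
have Hsort : sorted ltn s by apply: sorted_filter; [exact: ltn_trans| exact: iota_ltn_sorted].
have Hmono : forall t1 t2, t1 < t2 -> t2 < size s -> w t1 < w t2.
  move=> t1 t2 H12 H2; apply: (sorted_ltn_nth ltn_trans 0 Hsort) => //; rewrite inE; lia.
have zRn : zR < n.+1 by have := cut_top HcR (ltn_ord jR); lia.
have HwL : forall t, t < size s -> cL jL.+1 <= w t.
  move=> t Ht; have [Hm Hb] := Hmem t Ht; rewrite leqNgt; apply/negP => Hlt.
  have Hwn : w t < n.+1 by lia.
  have := ZL (inord (w t)); rewrite inordK // Hm => H; have := H ltac:(lia); done.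
have HwR : forall t, t < size s -> w t < cR jR.
  move=> t Ht; have [Hm Hb] := Hmem t Ht; rewrite ltnNge; apply/negP => Hlt.
  have Hwn : w t < n.+1 by lia.
  have := ZR (inord (w t)); rewrite inordK // Hm => H; have := H ltac:(lia); done.
have mL : forall x y, x <= y -> y <= l -> cL x <= cL y by move=> x y Hxy Hy; exact: (cut_mono HcL Hxy Hy).
have mR : forall x y, x <= y -> y <= l -> cR x <= cR y by move=> x y Hxy Hy; exact: (cut_mono HcR Hxy Hy).
have sL : forall x, x < l -> cL x < cL x.+1 by case: HcL => _ [].
have sR : forall x, x < l -> cR x < cR x.+1 by case: HcR => _ [].
pose c2 t := if t <= lo then cL t else if t <= hi then (w (t - lo).-1).+1 else cR t.
have w0L := HwL 0 ltac:(lia).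
have wdR := HwR (hi - lo) ltac:(lia).
have P2 : c2 hi <= cR hi.
  rewrite /c2; case: ifP => H1.
    have Elo : (lo : nat) = hi by lia.
    rewrite -Elo; rewrite Elo subnn in wdR.
    have := mL lo jL loL (ltnW (ltn_ord jL)); have := sL jL (ltn_ord jL);
    have := mR jR lo ltac:(lia) ltac:(lia); lia.
  rewrite leqnn; have := Hmono (hi - lo).-1 (hi - lo) ltac:(lia) ltac:(lia);
  have := mR jR hi hiR (ltnW hil); lia.
have P3 : cL lo.+1 <= c2 lo.+1.
  have := mL lo.+1 jL.+1 loL (ltn_ord jL).
  rewrite /c2 ltnn; case: ifP => H1; first by rewrite subSnn /=; lia.
  have Elo : (lo : nat) = hi by lia. rewrite Elo. have := HwR 0 ltac:(lia). have := mR jR hi.+1 ltac:(lia) hil; lia.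
have colL : forall (j1 : 'I_l) b, j1 <= lo -> cL j1 <= b < cL j1.+1 -> c2 j1 <= b < c2 j1.+1.
  move=> j1 b Hj Hb; rewrite {1}/c2 Hj.
  case: (ltnP j1 lo) => Hj2.
    by rewrite /c2 Hj2.
  have Ej : (j1 : nat) = lo by lia.
  move: Hb; rewrite Ej; lia.
have colR : forall (j1 : 'I_l) b, hi <= j1 -> cR j1 <= b < cR j1.+1 -> c2 j1 <= b < c2 j1.+1.
  move=> j1 b Hj Hb.
  have -> : c2 j1.+1 = cR j1.+1 by rewrite /c2; case: ifP; [lia|]; case: ifP; [lia|].
  case: (ltnP hi j1) => Hj2.
    by have -> : c2 j1 = cR j1 by rewrite /c2; case: ifP; [lia|]; case: ifP; [lia|].
  have Ej : (j1 : nat) = hi by lia.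
  move: Hb; rewrite Ej; lia.
have colM : forall t, lo <= t <= hi -> c2 t <= w (t - lo) < c2 t.+1.
  move=> t Ht; apply/andP; split.
    rewrite /c2; case: ifP => H1.
      have Et : t - lo = 0 by lia.
      rewrite Et; have := mL t jL ltac:(lia) (ltnW (ltn_ord jL)); lia.
    rewrite (_ : t <= hi) ?(andP Ht).2 //.
    apply: Hmono; lia.
  rewrite /c2; case: ifP => H1; first lia.
  case: ifP => H2.
    rewrite (_ : (t.+1 - lo).-1 = t - lo); last lia.
    lia.
  have Et : t = hi by lia.
  rewrite Et; have := HwR (hi - lo) ltac:(lia); have := mR jR hi.+1 ltac:(lia) hil;
  have := sR jR (ltn_ord jR); lia.
have Hc2 : is_cut l n.+1 c2.
  have [cL0 [cLl _]] := HcL; have [cR0 [cRl _]] := HcR.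
  split; first by rewrite /c2 leq0n.
  split; first by rewrite /c2; case: ifP; [lia|]; case: ifP; [lia|].
  move=> t Ht.
  case: (ltnP t lo) => H1.
    have := sL t Ht; rewrite /c2 H1 (_ : t <= lo); [lia|lia].
  case: (ltnP lo t) => H2; last first.
    have Et : t = lo by lia.
    by rewrite Et {1}/c2 leqnn; have := sL lo (ltn_ord lo); lia.
  case: (ltnP t hi) => H3.
    rewrite /c2 (_ : t <= lo = false); last lia.
    rewrite (_ : t.+1 <= lo = false); last lia.
    rewrite (_ : t <= hi); last lia. rewrite H3.
    rewrite (_ : (t.+1 - lo).-1 = t - lo); last lia.
    have := Hmono (t - lo).-1 (t - lo) ltac:(lia) ltac:(lia); lia.
  case: (ltnP hi t) => H4.
    have := sR t Ht; rewrite /c2 (_ : t <= lo = false); last lia.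
    rewrite (_ : t.+1 <= lo = false); last lia.
    rewrite (_ : t <= hi = false); last lia.
    rewrite (_ : t.+1 <= hi = false); last lia. lia.
  have Et : t = hi by lia.
  have := sR hi hil; rewrite Et.
  have -> : c2 hi.+1 = cR hi.+1 by rewrite /c2; case: ifP; [lia|]; case: ifP; [lia|].
  lia.
pose r2 t := if t <= i then (if fl then rR t else rL t) else (if fl then rL t else rR t).
have Hr2 : is_cut k m r2.
  have [rL0 [rLk rLs]] := HrL; have [rR0 [rRk rRs]] := HrR.
  have ik := ltn_ord i.
  split; first by rewrite /r2 /=; destruct fl.
  split; first by rewrite /r2 /= (_ : k <= i = false); [destruct fl|lia].
  move=> t Ht.
  case: (ltnP t i) => H1.
    rewrite /r2 /= H1 (ltnW H1); destruct fl; [exact: rRs|exact: rLs].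
  case: (ltnP i t) => H2.
    rewrite /r2 /= (_ : t <= i = false); last lia.
    rewrite (_ : t.+1 <= i = false); last lia.
    destruct fl; [exact: rLs|exact: rRs].
  have Et : t = i by lia.
  rewrite /r2 /= Et leqnn ltnn; destruct fl; lia.
exists r2, c2; split=> //; split=> //.
move=> i1 j1 Hp.
have useR : (forall a' : 'I_m, rR i1 <= a' < rR i1.+1 -> a' != a /\ r2 i1 <= a' < r2 i1.+1) ->
    hi <= j1 -> exists (a' : 'I_m) (b' : 'I_n.+1), [/\ r2 i1 <= a' < r2 i1.+1, c2 j1 <= b' < c2 j1.+1 & M a' b'].
  move=> Hrow Hj; have [a' [b' [H1 H2 H3]]] := WR i1 j1 Hp.
  have [Hne Hr] := Hrow a' H1; exists a', b'; split=> //; first exact: colR.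
  by move: H3; rewrite (negbTE Hne) /= orbF.
have useL : (forall a' : 'I_m, rL i1 <= a' < rL i1.+1 -> a' != a /\ r2 i1 <= a' < r2 i1.+1) ->
    j1 <= lo -> exists (a' : 'I_m) (b' : 'I_n.+1), [/\ r2 i1 <= a' < r2 i1.+1, c2 j1 <= b' < c2 j1.+1 & M a' b'].
  move=> Hrow Hj; have [a' [b' [H1 H2 H3]]] := WL i1 j1 Hp.
  have [Hne Hr] := Hrow a' H1; exists a', b'; split=> //; first exact: colL.
  by move: H3; rewrite (negbTE Hne) /= orbF.
have mrL : forall x y, x <= y -> y <= k -> rL x <= rL y by move=> x y Hxy Hy; exact: (cut_mono HrL Hxy Hy).
have mrR : forall x y, x <= y -> y <= k -> rR x <= rR y by move=> x y Hxy Hy; exact: (cut_mono HrR Hxy Hy).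
have ik := ltn_ord i; have i1k := ltn_ord i1.
case: (ltngtP i1 i) => Hi.
-
  have E1 : r2 i1 = (if fl then rR i1 else rL i1) by rewrite /r2 /= (ltnW Hi).
  have E2 : r2 i1.+1 = (if fl then rR i1.+1 else rL i1.+1) by rewrite /r2 /= Hi.
  rewrite E1 E2 in useR useL *.
  destruct fl; rename Hno into Hno'.
  + apply: useR.
      move=> a' Ha'; split=> //; apply/eqP => Ea; rewrite Ea in Ha'.
      have := mrR i1.+1 i Hi (ltnW ik); lia.
    rewrite leqNgt; apply/negP => Hj; exact: (Hno' i1 i j1 hi Hp Phi Hi Hj).
  + apply: useL.
      move=> a' Ha'; split=> //; apply/eqP => Ea; rewrite Ea in Ha'.
      have := mrL i1.+1 i Hi (ltnW ik); lia.
    rewrite leqNgt; apply/negP => Hj; exact: (Hno' i1 i j1 lo Hp Plo Hi Hj).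
-
  have E1 : r2 i1 = (if fl then rL i1 else rR i1) by rewrite /r2 /= (_ : i1 <= i = false) //; lia.
  have E2 : r2 i1.+1 = (if fl then rL i1.+1 else rR i1.+1) by rewrite /r2 /= (_ : i1.+1 <= i = false) //; lia.
  rewrite E1 E2 in useR useL *.
  destruct fl; rename Hno into Hno'.
  + apply: useL.
      move=> a' Ha'; split=> //; apply/eqP => Ea; rewrite Ea in Ha'.
      have := mrL i.+1 i1 Hi (ltnW i1k); lia.
    rewrite leqNgt; apply/negP => Hj; exact: (Hno' i i1 lo j1 Plo Hp Hi Hj).
  + apply: useR.
      move=> a' Ha'; split=> //; apply/eqP => Ea; rewrite Ea in Ha'.
      have := mrR i.+1 i1 Hi (ltnW i1k); lia.
    rewrite leqNgt; apply/negP => Hj; exact: (Hno' i i1 hi j1 Phi Hp Hi Hj).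
-
  have Ei : i1 = i by apply: val_inj.
  subst i1.
  have Hj := Hlo _ Hp; have Hj' := Hhi _ Hp.
  have [Hm _] := Hmem (j1 - lo) ltac:(lia).
  exists a, (inord (w (j1 - lo))); split=> //.
    rewrite /r2 /= leqnn ltnn; destruct fl; lia.
  have [_ Hb] := Hmem (j1 - lo) ltac:(lia).
  rewrite inordK; last lia.
  apply: colM; lia.
Qed.

Theorem lemma3p16 (k l : nat) (P : 'M[bool]_(k, l)) :
  avoids D2 P \/ avoids D2bar P -> row_bounded P.
Proof.
move=> HP.
have [fl Hno] : exists fl, forall (i1 i2 : 'I_k) (j1 j2 : 'I_l), P i1 j1 -> P i2 j2 -> i1 < i2 ->
          (if fl then j1 < j2 else j2 < j1) -> False.
  by case: HP => H; [exists true; exact: noD2 H | exists false; exact: noD2bar H].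
exists (k.+1 * l.+1) => m n M Hcrit a.
case: n M Hcrit => [|n] M Hcrit.
  by rewrite /row_complexity /zero_runs size_map size_enum_ord.
pose rv b := M a (inord b).
pose rs z := ~~ rv z && ((z == 0) || rv z.-1).
have Hnth : forall x0 z, z < n.+1 -> nth x0 [seq M a j | j <- enum 'I_n.+1] z = rv z.
  move=> x0 z Hz; rewrite (nth_map ord0); last by rewrite size_enum_ord.
  congr (M a _); apply/eqP; rewrite -val_eqE /= nth_enum_ord // inordK //.
have -> : row_complexity M a = count rs (iota 0 n.+1).
  rewrite /row_complexity /zero_runs size_map size_enum_ord.
  apply: eq_in_count => z; rewrite mem_iota add0n => Hz.
  rewrite /rs Hnth //; case: (z == 0) => //=; rewrite Hnth //; lia.
pose Lab z i := exists (Hi : i < k) j r c, zdata P M a z (Ordinal Hi) j r c.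
pose lab z := epsilon (inhabits 0) (Lab z).
pose F z := count rv (iota 0 z).
pose g z : 'I_k.+1 * 'I_l.+1 := (inord (lab z), inord (F z %% l.+1)).
pose RS := [seq z <- iota 0 n.+1 | rs z].
have HRS : forall z, z \in RS -> [/\ z < n.+1, rv z = false & (z == 0) || rv z.-1].
  move=> z; rewrite mem_filter mem_iota /rs => /andP[/andP[H1 H2] H3].
  split; [lia | exact: negbTE H1 | exact: H2].
have HLab : forall z, z \in RS -> Lab z (lab z).
  move=> z Hz; apply: epsilon_spec; have [Hzn Hrv _] := HRS z Hz.
  have [i [j [r [c Hd]]]] := zero_label (b := inord z) Hcrit Hrv.
  move: Hd; rewrite inordK // => Hd.
  case: i Hd => i Hi Hd; exists i, Hi, j, r, c; exact: Hd.
have Hne : forall z1 z2, z1 \in RS -> z2 \in RS -> z1 < z2 -> g z1 = g z2 -> False.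
  move=> z1 z2 H1 H2 Hlt [Eg1 Eg2].
  have [Hi1 [j1 [r1 [c1 Hd1]]]] := HLab z1 H1.
  have [Hi2 [j2 [r2 [c2 Hd2]]]] := HLab z2 H2.
  have El : lab z1 = lab z2.
    have := congr1 (@nat_of_ord _) Eg1; rewrite !inordK; lia.
  have Ef : F z1 %% l.+1 = F z2 %% l.+1.
    have := congr1 (@nat_of_ord _) Eg2; rewrite !inordK ?ltn_pmod //.
  have HF : F z2 = F z1 + count rv (iota z1 (z2 - z1)).
    by rewrite /F -count_cat -iotaD; congr count; congr iota; lia.
  have [Hz2n Hrv2 Hpr2] := HRS z2 H2.
  have Hpos : 0 < count rv (iota z1 (z2 - z1)).
    rewrite -has_count; apply/hasP; exists z2.-1.
      rewrite mem_iota; lia.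
    by move: Hpr2; rewrite (_ : (z2 == 0) = false) //; lia.
  have Hl : l.+1 <= count rv (iota z1 (z2 - z1)).
    apply: dvdn_leq => //.
    have : (F z1 + count rv (iota z1 (z2 - z1)) == F z1 %[mod l.+1]) by rewrite -HF Ef.
    by rewrite eqn_mod_dvd ?leq_addr // addKn.
  have Hi1' : lab z2 < k by rewrite -El.
  have Eo : Ordinal Hi1 = Ordinal Hi2 by apply: val_inj.
  rewrite Eo in Hd1.
  apply: (proj1 Hcrit).
  apply: (combine Hno Hd1 Hd2 Hlt); exact: ltnW Hl.
have Hinj : {in RS &, injective g}.
  move=> z1 z2 H1 H2 Eg; case: (ltngtP z1 z2) => // H.
  - by exfalso; exact: Hne z1 z2 H1 H2 H Eg.
  - by exfalso; exact: Hne z2 z1 H2 H1 H (esym Eg).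
rewrite -size_filter -/RS -(size_map g).
have -> : k.+1 * l.+1 = size (enum {: 'I_k.+1 * 'I_l.+1}).
  by rewrite -cardE card_prod !card_ord.
apply: uniq_leq_size; first by rewrite (map_inj_in_uniq Hinj) filter_uniq // iota_uniq.
by move=> x _; rewrite mem_enum.
Qed.
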